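(* Let $\mathcal{Z}=\mathcal{X}\times\mathcal{Y}$ with a probability distribution, let $\mathcal{H}$ be a class of bounded real-valued functions $h:\mathcal{X}\times\mathcal{X}\to\mathbb{R}$, let $Y:\mathcal{Y}\times\mathcal{Y}\to\mathbb{R}$ be either $Y(y,y')=y-y'$ or $Y(y,y')=yy'$, with $Y:=\sup_{y,y'\in\mathcal{Y}}|Y(y,y')|<\infty$, and let $\phi:\mathbb{R}\to\mathbb{R}$ be $L$-Lipschitz. Define the loss $\ell(h,z,z')=\phi(h(x,x')Y(y,y'))$ for $z=(x,y),z'=(x',y')$. Then \[ \mathcal{R}_n(\ell\circ\mathcal{H})\le LY\,\mathcal{R}_n(\mathcal{H}). \]
   Context: $\ell\circ\mathcal{H}=\{(z,z')\mapsto\ell(h,z,z'):h\in\mathcal{H}\}$. For a class $\mathcal{G}$ of functions of pairs, $\mathcal{R}_n(\mathcal{G})=\mathbb{E}\left[\sup_{g\in\mathcal{G}}\frac1n\sum_{i=1}^n\epsilon_i g(z,z_i)\right]$, the expectation over i.i.d. Rademacher signs $\epsilon_i$ and i.i.d. $z,z_1,\dots,z_n$ from the distribution; for $\mathcal{H}$, $h(z,z_i)$ means $h(x,x_i)$. *)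

(* Defs.v *)
From HB Require Import structures.
From mathcomp Require Import all_boot all_order all_algebra.
From mathcomp Require Import all_classical all_reals all_analysis.
Set Implicit Arguments. Unset Strict Implicit. Unset Printing Implicit Defensive.
Import Order.TTheory GRing.Theory Num.Theory.
Local Open Scope classical_set_scope.
Local Open Scope ring_scope.
Local Open Scope ereal_scope.

(* Expectation of F (z_0, ..., z_{k-1}) where z_0, ..., z_{k-1} are i.i.d.
   with law P, written as the iterated integral over the k coordinates. *)
Fixpoint iid_expect (d : measure_display) (T : measurableType d) (R : realType)
    (P : probability T R) (k : nat) (F : seq T -> \bar R) : \bar R :=
  match k with
  | 0%N => F [::]
  | k.+1 => \int[P]_z iid_expect P k (fun s => F (z :: s))
  end.

Definition rsign (R : realType) (b : bool) : R := if b then 1%R else (-1)%R.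

(* Empirical (conditional) Rademacher average:
   E_eps [ sup_{g in G} (1/n) sum_i eps_i g(z, z_i) ],
   the expectation over i.i.d. uniform signs written as the finite average
   over {-1,1}^n. *)
Definition rad_avg (T : Type) (R : realType) (n : nat)
    (G : set (T -> T -> R)) (z : T) (zs : 'I_n -> T) : \bar R :=
  ((2 ^+ n)^-1)%:E *
  \sum_(eps : {ffun 'I_n -> bool})
     ereal_sup [set ((n%:R)^-1 * \sum_(i < n) rsign R (eps i) * g z (zs i))%:E
               | g in G].

(* Rademacher complexity R_n(G) = E_{eps, z, z_1..z_n}[ sup_g (1/n) sum_i eps_i g(z,z_i) ]
   with z, z_1, ..., z_n i.i.d. from P. *)
Definition rademacher (d : measure_display) (T : measurableType d) (R : realType)
    (P : probability T R) (n : nat) (G : set (T -> T -> R)) : \bar R :=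
  iid_expect P n.+1 (fun s =>
    @rad_avg T R n G (head (point : T) s)
      (fun i : 'I_n => nth (point : T) (behead s) i)).

Definition Ybound (Yt : Type) (R : realType) (lab : Yt -> R) (Yop : R -> R -> R)
  : \bar R :=
  ereal_sup [set r : \bar R | exists y y' : Yt, r = (`|Yop (lab y) (lab y')|)%:E].

(* Main.v *)
Require Import Defs.
From HB Require Import structures.
From mathcomp Require Import all_boot all_order all_algebra.
From mathcomp Require Import all_classical all_reals all_analysis.
From mathcomp Require Import ring lra.
Import Order.TTheory GRing.Theory Num.Theory.
Local Open Scope classical_set_scope.
Local Open Scope ring_scope.
Local Open Scope ereal_scope.
Import HBNNSimple.
Lemma int_le_nonneg d (T : measurableType d) (R : realType) (mu : {measure set T -> \bar R})
  (f g : T -> \bar R) : (forall x, 0 <= f x) -> (forall x, f x <= g x) ->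
  \int[mu]_x f x <= \int[mu]_x g x.
Proof.
move=> f0 fg.
have g0 x : 0 <= g x by apply: le_trans (f0 x) (fg x).
rewrite !ge0_integralTE//; apply: ereal_sup_le => _ [h /= hf <-].
by exists h => //= x; apply: le_trans (hf x) (fg x).
Qed.

Lemma int_scale_le d (T : measurableType d) (R : realType) (mu : {measure set T -> \bar R})
  (f : T -> \bar R) (c : R) : (0 < c)%R -> (forall x, 0 <= f x) ->
  \int[mu]_x (c%:E * f x) <= c%:E * \int[mu]_x f x.
Proof.
move=> c0 f0.
have cf0 x : 0 <= c%:E * f x by rewrite mule_ge0// lee_fin ltW.
rewrite !ge0_integralTE//; apply: ge_ereal_sup => _ [h /= hf <-].
have ci0 : (0 <= c^-1)%R by rewrite invr_ge0 ltW.
pose h' := scale_nnsfun h ci0.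
have -> : sintegral mu h = c%:E * sintegral mu h'.
  rewrite /h' /scale_nnsfun /=.
  rewrite sintegralrM muleA -EFinM divff ?mul1e//; exact: lt0r_neq0.
rewrite lee_pmul2l//; apply: ereal_sup_ubound; exists h' => //= x.
rewrite /h' /scale_nnsfun /= -(@lee_pmul2l _ c%:E)// ?ltEE //.
by rewrite -EFinM mulrA divff ?mul1r ?hf//; exact: lt0r_neq0.
Qed.

Lemma iid_ge0 d (T : measurableType d) (R : realType) (P : probability T R) k
  (F : seq T -> \bar R) : (forall s, 0 <= F s) -> 0 <= iid_expect P k F.
Proof.
elim: k F => [|k IH] F F0 /=; first exact: F0.
by apply: integral_ge0 => z _; apply: IH.
Qed.

Lemma iid_le d (T : measurableType d) (R : realType) (P : probability T R) k
  (F G : seq T -> \bar R) (c : R) : (0 <= c)%R ->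
  (forall s, 0 <= F s) -> (forall s, 0 <= G s) ->
  (forall s, F s <= c%:E * G s) -> iid_expect P k F <= c%:E * iid_expect P k G.
Proof.
move=> c0; elim: k F G => [|k IH] F G F0 G0 FG /=; first exact: FG.
apply: (@le_trans _ _ (\int[P]_z (c%:E * iid_expect P k (fun s => G (z :: s))))).
  apply: int_le_nonneg => z; first exact: iid_ge0.
  by apply: IH.
have [->|cpos] := eqVneq c 0%R.
  rewrite mul0e; under eq_integral do rewrite mul0e.
  by rewrite integral0.
apply: int_scale_le; first by rewrite lt0r cpos.
by move=> z; apply: iid_ge0.
Qed.

Lemma iid_Ny d (T : measurableType d) (R : realType) (P : probability T R) k :
  iid_expect P k (fun _ => -oo) = -oo.
Proof.
elim: k => [//|k IH] /=; rewrite IH.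
have := integral_cst P measurableT -oo; rewrite /cst => ->.
by rewrite [X in _ * X](_ : _ = 1) ?mule1 //; exact: probability_setT.
Qed.

Lemma sup_add_le (R : realType) A (S : set A) (f g : A -> R) (z : \bar R) :
  (forall a b, S a -> S b -> ((f a + g b)%:E <= z)) ->
  ereal_sup [set (f a)%:E | a in S] + ereal_sup [set (g b)%:E | b in S] <= z.
Proof.
have [[a0 Sa0]|S0] := pselect (S !=set0); last first.
  have -> : S = set0 by apply/seteqP; split => x // Sx; apply: S0; exists x.
  by rewrite !image_set0 ereal_sup0 addNye leNye.
case: z => [r| |] H; last first.
- by have := H a0 a0 Sa0 Sa0.
- exact: leey.
have hX b : S b -> ereal_sup [set (f a)%:E | a in S] <= (r - g b)%:E.
  move=> Sb; apply: ge_ereal_sup => _ [a Sa <-]; rewrite lee_fin lerBrDr.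
  by have := H a b Sa Sb; rewrite lee_fin.
have finX : ereal_sup [set (f a)%:E | a in S] \is a fin_num.
  rewrite fin_numE; apply/andP; split.
    rewrite -ltNye; apply: (@lt_le_trans _ _ (f a0)%:E); first exact: ltNyr.
    by apply: ereal_sup_ubound; exists a0.
  by rewrite -ltey; apply: (@le_lt_trans _ _ (r - g a0)%:E); [exact: hX|exact: ltry].
rewrite addeC -leeBrDr//; apply: ge_ereal_sup => _ [b Sb <-].
by rewrite leeBrDr// addeC -leeBrDr// -EFinB; exact: hX.
Qed.

Definition flipf n (j : 'I_n) (e : {ffun 'I_n -> bool}) : {ffun 'I_n -> bool} :=
  [ffun i => if i == j then ~~ e i else e i].
Arguments flipf {n}.

Lemma flipfK n (j : 'I_n) : involutive (flipf j).
Proof.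
by move=> e; apply/ffunP => i; rewrite !ffunE; case: eqP => // _; rewrite negbK.
Qed.
Arguments flipfK {n}.

Lemma xx_le (R : realType) (x y : \bar R) : x + x <= y + y -> x <= y.
Proof.
case: x => [x| |]; case: y => [y| |] //=; rewrite ?lee_fin ?leey ?leNye//.
by move=> h; lra.
Qed.

Definition Sup (R : realType) A n (S : set A) (w : R) (U : 'I_n -> A -> R)
  (e : {ffun 'I_n -> bool}) : \bar R :=
  ereal_sup [set (w * \sum_(i < n) rsign R (e i) * U i a)%:E | a in S].
Arguments Sup {R A n}.

Lemma aux_ineq (R : realType) (w s ua ub va vb ca cb : R) : (0 <= w)%R ->
  (s * (ua - ub) <= s * (va - vb))%R ->
  (w * (s * ua + ca) + w * (- (s * ub) + cb) <= w * (s * va + ca) + w * (- (s * vb) + cb))%R.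
Proof. move=> w0 h; nra. Qed.

Lemma aux_ineq2 (R : realType) (w s ua ub va vb ca cb : R) : (0 <= w)%R ->
  (s * (ua - ub) <= s * (vb - va))%R ->
  (w * (s * ua + ca) + w * (- (s * ub) + cb) <= w * (s * vb + cb) + w * (- (s * va) + ca))%R.
Proof. move=> w0 h; nra. Qed.

Lemma step (R : realType) A n (S : set A) (w : R) (j : 'I_n) (U V : 'I_n -> A -> R) :
  (0 <= w)%R -> (forall i, i != j -> U i = V i) ->
  (forall a b, S a -> S b -> (U j a - U j b <= `|V j a - V j b|)%R) ->
  \sum_e Sup S w U e <= \sum_e Sup S w V e.
Proof.
move=> w0 UV Hj.
apply: xx_le.
rewrite [X in X + _ <= _](reindex_inj (can_inj (flipfK j))) /=.
rewrite [X in _ <= X + _](reindex_inj (can_inj (flipfK j))) /=.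
rewrite -!big_split /=; apply: lee_sum => e _.
pose s := rsign R (e j).
pose c a := (\sum_(i < n | i != j) rsign R (e i) * U i a)%R.
have cV a : (\sum_(i < n | i != j) rsign R (e i) * V i a)%R = c a.
  by apply: eq_bigr => i ij; rewrite UV.
have sp W a : (\sum_(i < n) rsign R (e i) * W i a =
   s * W j a + \sum_(i < n | i != j) rsign R (e i) * W i a)%R.
  by rewrite (bigD1 j).
have sf W a : (\sum_(i < n) rsign R (flipf j e i) * W i a =
   - (s * W j a) + \sum_(i < n | i != j) rsign R (e i) * W i a)%R.
  rewrite (bigD1 j)//= ffunE eqxx; congr (_ + _)%R.
    by rewrite /s; case: (e j) => /=; rewrite ?mulN1r ?mul1r ?opprK.
  by apply: eq_bigr => i ij; rewrite ffunE (negbTE ij).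
have EU1 : Sup S w U e = ereal_sup [set (w * (s * U j a + c a))%:E | a in S].
  by rewrite /Sup; congr ereal_sup; apply/seteqP; split => _ [a Sa <-]; exists a => //; rewrite sp.
have EU2 : Sup S w U (flipf j e) = ereal_sup [set (w * (- (s * U j a) + c a))%:E | a in S].
  by rewrite /Sup; congr ereal_sup; apply/seteqP; split => _ [a Sa <-]; exists a => //; rewrite sf.
have V1 a : S a -> ((w * (s * V j a + c a))%:E <= Sup S w V e).
  by move=> Sa; apply: ereal_sup_ubound; exists a => //; rewrite sp cV.
have V2 a : S a -> ((w * (- (s * V j a) + c a))%:E <= Sup S w V (flipf j e)).
  by move=> Sa; apply: ereal_sup_ubound; exists a => //; rewrite sf cV.
rewrite [X in X <= _]addeC [X in _ <= X]addeC EU1 EU2; apply: sup_add_le => a b Sa Sb.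
have hs : (s * s = 1)%R by rewrite /s; case: (e j) => /=; rewrite ?mulN1r ?mul1r ?opprK.
have hU : (s * (U j a - U j b) <= `|s * (V j a - V j b)|)%R.
  rewrite normrM /s; case: (e j) => /=; rewrite ?normrN normr1 !mul1r ?mulN1r.
    exact: Hj.
  by rewrite opprB distrC; apply: Hj.
have [hd|hd] := lerP 0 (s * (V j a - V j b))%R.
- apply: (@le_trans _ _ ((w * (s * V j a + c a))%:E + (w * (- (s * V j b) + c b))%:E)).
    rewrite -EFinD lee_fin; apply: aux_ineq => //.
    by rewrite -(ger0_norm hd).
  by apply: leeD; [apply: V1|apply: V2].
- apply: (@le_trans _ _ ((w * (s * V j b + c b))%:E + (w * (- (s * V j a) + c a))%:E)).
    rewrite -EFinD lee_fin; apply: aux_ineq2 => //.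
    by rewrite (ltr0_norm hd) in hU; rewrite (le_trans hU)// -mulrN opprB.
  by apply: leeD; [apply: V1|apply: V2].
Qed.

Lemma contraction (R : realType) A n (S : set A) (w : R) (U V : 'I_n -> A -> R) :
  (0 <= w)%R ->
  (forall j a b, S a -> S b -> (U j a - U j b <= `|V j a - V j b|)%R) ->
  \sum_e Sup S w U e <= \sum_e Sup S w V e.
Proof.
move=> w0 HUV.
pose Uk k := fun i : 'I_n => if (i < k)%N then V i else U i.
have HU0 : Uk 0%N = U by apply/funext => i.
have HUn : Uk n = V by apply/funext => i; rewrite /Uk ltn_ord.
suff : forall k, (k <= n)%N -> \sum_e Sup S w U e <= \sum_e Sup S w (Uk k) e.
  by move=> /(_ n (leqnn n)); rewrite HUn.
elim=> [|k IH] kn; first by rewrite HU0.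
apply: (le_trans (IH (ltnW kn))).
apply: (@step _ _ _ _ _ (Ordinal kn)) => //.
  move=> i ik; rewrite /Uk; congr (if _ then _ else _).
  by move: ik; rewrite -val_eqE /= => ik; rewrite [in RHS]ltnS [in RHS]leq_eqVlt (negbTE ik).
move=> a b Sa Sb; rewrite /Uk /= ltnn ltnSn.
exact: HUV.
Qed.

Lemma mulDle (R : realType) (K : R) (x y : \bar R) : (0 <= K)%R ->
  K%:E * x + K%:E * y <= K%:E * (x + y).
Proof.
move=> K0; have [xy|nxy] := boolP (x +? y); first by rewrite muleDr.
have [->|Kp] := eqVneq K 0%R; first by rewrite !mul0e adde0.
have Kpos : (0 < K)%R by rewrite lt0r Kp.
move: nxy; case: x => [x| |]; case: y => [y| |] //= _.
- by rewrite ![K%:E * _]muleC gt0_mulye ?gt0_mulNye ?lte_fin // addye ?addNye // leNye.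
- by rewrite ![K%:E * _]muleC gt0_mulye ?gt0_mulNye ?lte_fin // addye ?addNye // leNye.
Qed.

Lemma sum_distr_le (R : realType) (I : Type) (s : seq I) (K : R) (F : I -> \bar R) :
  (0 <= K)%R -> \sum_(i <- s) K%:E * F i <= K%:E * \sum_(i <- s) F i.
Proof.
move=> K0; elim: s => [|a s IH]; first by rewrite !big_nil mule0.
rewrite !big_cons; apply: (le_trans _ (@mulDle _ K _ _ K0)).
exact: leeD.
Qed.

Lemma Sup_scale (R : realType) A n (S : set A) (w K : R) (V : 'I_n -> A -> R) e :
  (0 <= K)%R ->
  Sup S w (fun i a => K * V i a)%R e <= K%:E * Sup S w V e.
Proof.
move=> K0; apply: ge_ereal_sup => _ [a Sa <-].
have -> : (w * \sum_(i < n) rsign R (e i) * (K * V i a))%R =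
          (K * (w * \sum_(i < n) rsign R (e i) * V i a))%R.
  rewrite mulrCA; congr (_ * _)%R; rewrite mulr_sumr; apply: eq_bigr => i _.
  by rewrite mulrCA.
rewrite EFinM; apply: lee_wpmul2l; first by rewrite lee_fin.
by apply: ereal_sup_ubound; exists a.
Qed.

Definition negf n (e : {ffun 'I_n -> bool}) : {ffun 'I_n -> bool} := [ffun i => ~~ e i].

Lemma negfK n : involutive (@negf n).
Proof. by move=> e; apply/ffunP => i; rewrite !ffunE negbK. Qed.

Lemma Sup_sum_ge0 (R : realType) A n (S : set A) (w : R) (U : 'I_n -> A -> R) a0 :
  S a0 -> 0 <= \sum_e Sup S w U e.
Proof.
move=> Sa0.
pose F (e : {ffun 'I_n -> bool}) := (w * \sum_(i < n) rsign R (e i) * U i a0)%R.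
have F0 : (\sum_e F e = 0)%R.
  have h : (\sum_e F e = - \sum_e F e)%R.
    rewrite [in LHS](reindex_inj (can_inj (@negfK n))) /= -sumrN.
    apply: eq_bigr => e _; rewrite /F -mulrN -sumrN; congr (_ * _)%R.
    by apply: eq_bigr => i _; rewrite ffunE; case: (e i); rewrite /= ?mulN1r ?mul1r ?opprK ?mulNr.
  by apply/eqP; rewrite -[_ == _]/(_ == 0%R); move/eqP: h; rewrite -subr_eq0 opprK -mulr2n mulrn_eq0.
apply: (@le_trans _ _ (\sum_e (F e)%:E)).
  by rewrite sumEFin F0.
apply: lee_sum => e _; apply: ereal_sup_ubound; exists a0 => //.
Qed.

Lemma rad_Sup (T : Type) (R : realType) A n (F : A -> T -> T -> R) (S : set A) z zs :
  @rad_avg T R n [set F a | a in S] z zs =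
  ((2 ^+ n)^-1)%:E * \sum_e Sup S (n%:R^-1) (fun i a => F a z (zs i)) e.
Proof.
rewrite /rad_avg /Sup; congr (_ * _); apply: eq_bigr => e _; congr ereal_sup.
by rewrite image_comp.
Qed.

Theorem theorem7 (R : realType) (d1 d2 : measure_display)
  (X : measurableType d1) (Ylab : measurableType d2)
  (lab : Ylab -> R) (lab_inj : injective lab)
  (P : probability (X * Ylab)%type R)
  (H : set (X -> X -> R))
  (H_bdd : forall h, H h -> exists M : R, forall x x', (`|h x x'| <= M)%R)
  (Yop : R -> R -> R)
  (HYop : Yop = (fun y y' => y - y')%R \/ Yop = (fun y y' => y * y')%R)
  (Yfin : Ybound lab Yop
          < +oo)
  (phi : R -> R) (L : R)
  (phi_lip : forall a b, (`|phi a - phi b| <= L * `|a - b|)%R)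
  (n : nat) :
  rademacher P n
    [set (fun z z' : X * Ylab => phi (h z.1 z'.1 * Yop (lab z.2) (lab z'.2))%R) | h in H]
  <= L%:E * Ybound lab Yop
     * rademacher P n [set (fun z z' : X * Ylab => h z.1 z'.1) | h in H].
Proof.
have L0 : (0 <= L)%R.
  have := phi_lip 1%R 0%R; rewrite subr0 normr1 mulr1; apply: le_trans.
  exact: normr_ge0.
have Yub y y' : (`|Yop (lab y) (lab y')|)%:E <= Ybound lab Yop.
  by apply: ereal_sup_ubound; exists y, y'.
have Y0 : 0 <= Ybound lab Yop.
  by apply: le_trans (Yub point point); rewrite lee_fin.
have Yfn : Ybound lab Yop \is a fin_num by rewrite ge0_fin_numE.
set Yb := fine (Ybound lab Yop).
have YbE : Ybound lab Yop = Yb%:E by rewrite /Yb fineK.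
have Yb0 : (0 <= Yb)%R by rewrite -lee_fin -YbE.
rewrite YbE -EFinM.
have K0 : (0 <= L * Yb)%R by rewrite mulr_ge0.
have [[h0 Hh0]|H0] := pselect (H !=set0); last first.
  have -> : H = set0 by apply/seteqP; split => x // Sx; apply: H0; exists x.
  rewrite image_set0 /rademacher.
  under [X in iid_expect _ _ X]funext => s do rewrite /rad_avg.
  set F := (fun s => _).
  have -> : F = (fun _ => -oo).
    apply/funext => s; rewrite /F.
    rewrite (bigD1 [ffun _ => true])//= image_set0 ereal_sup0 addNye.
    by rewrite muleC gt0_mulNye// lte_fin invr_gt0 exprn_gt0.
  by rewrite iid_Ny leNye.
rewrite /rademacher; apply: iid_le => //.
- move=> s; rewrite rad_Sup; apply: mule_ge0.
    by rewrite lee_fin invr_ge0 exprn_ge0.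
  exact: (@Sup_sum_ge0 _ _ _ _ _ _ h0 Hh0).
- move=> s; rewrite rad_Sup; apply: mule_ge0.
    by rewrite lee_fin invr_ge0 exprn_ge0.
  exact: (@Sup_sum_ge0 _ _ _ _ _ _ h0 Hh0).
move=> s; rewrite !rad_Sup /=.
set z := head point s; set zs := fun i : 'I_n => nth point (behead s) i.
rewrite muleCA; apply: lee_wpmul2l; first by rewrite lee_fin invr_ge0 exprn_ge0.
apply: le_trans (sum_distr_le _ _ _ _ _ K0).
apply: le_trans; last first.
  apply: lee_sum => e _.
  exact: (@Sup_scale _ _ _ H _ _ (fun i a => a z.1 (zs i).1) e K0).
apply: contraction; first by rewrite invr_ge0.
move=> j a b _ _ /=.
apply: le_trans (ler_norm _) _.
apply: le_trans (phi_lip _ _) _.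
rewrite -mulrBl -mulrBr !normrM (ger0_norm L0) (ger0_norm Yb0) -mulrA.
apply: ler_wpM2l => //; rewrite mulrC; apply: ler_wpM2r; first exact: normr_ge0.
by rewrite -lee_fin -YbE.
Qed.
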